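(* Let $d\ge2$, $n\ge1$, $\gamma$ a positive conductivity on the lattice graph below, and $d-1\le t\le dn-1$. For each node $p\in D\cup\partial D$ define $\mathbf v_p\in\mathbb R^{D\cup\partial D}$ by $(\mathbf v_p)_q=\gamma_{pq}$ if $q\in\mathcal N(p)$, $(\mathbf v_p)_p=-\sum_{r\in\mathcal N(p)}\gamma_{pr}$, and $(\mathbf v_p)_q=0$ otherwise. Then there is an orthogonal direct sum decomposition (with respect to the standard inner product) $$\mathcal U^{(t)}\oplus\operatorname{span}\{\mathbf v_p|_{L_t^{\mathcal S}\cup J_t^{\mathcal S}}:p\in L_{t+1}^{\mathcal S}\}=\mathbb R^{L_t^{\mathcal S}\cup J_t^{\mathcal S}}.$$
   Context: Lattice: $D=\{x\in\mathbb Z^d:1\le x_i\le n\ \forall i\}$, $\partial D=\{p\in\mathbb Z^d:\min_{q\in D}\|q-p\|_{\ell^1}=1\}$; $E$ = unordered pairs $pq\subseteq D\cup\partial D$ with $\|p-q\|_{\ell^1}=1$, not both in $\partial D$; $\mathcal N(p)=\{q:pq\in E\}$. Conductivity $\gamma:E\to(0,\infty)$, symmetric. $S_\gamma\varphi$ is the unique $\mathbf u\in\mathbb R^{D\cup\partial D}$ with $\sum_{q\in\mathcal N(p)}\gamma_{pq}(\mathbf u_q-\mathbf u_p)=0$ for all $p\in D$ and $\mathbf u=\varphi$ on $\partial D$. Functions on subsets are extended by zero. With $s(x)=\sum_ix_i$: $L_t=\{x\in D:s(x)=t\}$, $L_t^{\mathcal S}=\{x\in D:s(x)\le t\}$, $K_t^+=\{x\in\partial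 D:s(x)=t,\max_ix_i=n+1\}$, $K_t^-=\{x\in\partial D:s(x)=t,\min_ix_i=0\}$, $K_t^{\mathcal S\pm}=\bigcup_{\ell\le t}K_\ell^\pm$, $J_t^{\mathcal S}=K_t^{\mathcal S-}\cup K_{t+1}^{\mathcal S+}$. $T_1^{(t)}:\mathbb R^{J_t^{\mathcal S}}\to\mathbb R^{L_{t+1}}$, $\varphi\mapsto(S_\gamma\varphi)|_{L_{t+1}}$. $\mathcal U^{(t)}=\{(S_\gamma\varphi)|_{J_t^{\mathcal S}\cup L_t^{\mathcal S}}:\varphi\in\ker T_1^{(t)}\}\subseteq\mathbb R^{J_t^{\mathcal S}\cup L_t^{\mathcal S}}$. *)

(* Defs.v *)
From mathcomp Require Import all_boot all_order all_algebra.
From mathcomp Require Import reals.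
From Stdlib Require Import ClassicalEpsilon.
Set Implicit Arguments. Unset Strict Implicit. Unset Printing Implicit Defensive.
Import Order.TTheory GRing.Theory Num.Theory.
Local Open Scope ring_scope.

(* Lattice points with coordinates in {0,..,n+1}; every point of D ∪ ∂D is of this form. *)
Definition pt (d n : nat) := {ffun 'I_d -> 'I_n.+2}.

Definition ssum d n (x : pt d n) : nat := (\sum_(i < d) (x i : nat))%N.

Definition l1 d n (x y : pt d n) : nat :=
  (\sum_(i < d) (((x i : nat) - y i) + ((y i : nat) - x i)))%N.

Definition inD d n (x : pt d n) : bool := [forall i, (0 < (x i : nat) <= n)%N].

Definition inB d n (x : pt d n) : bool :=
  ~~ inD x && [exists q : pt d n, inD q && (l1 q x == 1%N)].

Definition inV d n (x : pt d n) : bool := inD x || inB x.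

Definition edge d n (p q : pt d n) : bool :=
  [&& inV p, inV q, l1 p q == 1%N & ~~ (inB p && inB q)].

Definition Lv d n (t : nat) : {set pt d n} := [set x | inD x & ssum x == t].
Definition LS d n (t : nat) : {set pt d n} := [set x | inD x & (ssum x <= t)%N].
Definition Kp d n (t : nat) : {set pt d n} :=
  [set x | [&& inB x, ssum x == t & [exists i, (x i : nat) == n.+1]]].
Definition Km d n (t : nat) : {set pt d n} :=
  [set x | [&& inB x, ssum x == t & [exists i, (x i : nat) == 0%N]]].
Definition KSp d n (t : nat) : {set pt d n} := \bigcup_(l < t.+1) Kp d n l.
Definition KSm d n (t : nat) : {set pt d n} := \bigcup_(l < t.+1) Km d n l.
Definition JS d n (t : nat) : {set pt d n} := KSm d n t :|: KSp d n t.+1.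

Definition AS d n (t : nat) : {set pt d n} := LS d n t :|: JS d n t.

Definition restr d n (R : realType) (A : {set pt d n}) (f : pt d n -> R) : pt d n -> R :=
  fun x => if x \in A then f x else 0.

Definition dirichlet d n (R : realType) (gam : pt d n -> pt d n -> R)
    (phi u : pt d n -> R) : Prop :=
  (forall p, inD p -> \sum_(q | edge p q) gam p q * (u q - u p) = 0) /\
  (forall p, inB p -> u p = phi p) /\
  (forall p, ~~ inV p -> u p = 0).

Definition Sgam d n (R : realType) (gam : pt d n -> pt d n -> R) (phi : pt d n -> R)
  : pt d n -> R :=
  epsilon (inhabits (fun _ => 0)) (dirichlet gam phi).

(* U^(t): restrictions to L_t^S ∪ J_t^S of S_gamma phi, phi ∈ R^{J_t^S} in ker T_1^(t) *)
Definition Ut d n (R : realType) (gam : pt d n -> pt d n -> R) (t : nat)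
    (u : pt d n -> R) : Prop :=
  exists phi : pt d n -> R,
    (forall x, x \notin JS d n t -> phi x = 0) /\
    (forall x, x \in Lv d n t.+1 -> Sgam gam phi x = 0) /\
    (forall x, u x = restr (AS d n t) (Sgam gam phi) x).

Definition vp d n (R : realType) (gam : pt d n -> pt d n -> R) (p : pt d n) : pt d n -> R :=
  fun q => if edge p q then gam p q
           else if q == p then - \sum_(r | edge p r) gam p r else 0.

Definition Wt d n (R : realType) (gam : pt d n -> pt d n -> R) (t : nat)
    (w : pt d n -> R) : Prop :=
  exists c : pt d n -> R,
    forall x, w x = \sum_(p in LS d n t.+1) c p * restr (AS d n t) (vp gam p) x.

Definition dotp d n (R : realType) (u w : pt d n -> R) : R := \sum_(x : pt d n) u x * w x.

(* Main.v *)
Require Import Defs.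
From mathcomp Require Import all_boot all_order all_algebra.
From mathcomp Require Import reals zify ring.
From Stdlib Require Import ClassicalEpsilon.
Set Implicit Arguments. Unset Strict Implicit. Unset Printing Implicit Defensive.
Import Order.TTheory GRing.Theory Num.Theory.
Local Open Scope ring_scope.
Section LA.
Variables (R : realType) (T : finType).

Definition vec (u : T -> R) : 'rV[R]_#|T| := \row_i u (enum_val i).

Lemma sum_T (F : T -> R) : \sum_(x : T) F x = \sum_(i < #|T|) F (enum_val i).
Proof. by rewrite -(big_enum_val _ (A := T)). Qed.

Lemma solve_inj (K : T -> T -> R) :
  (forall u : T -> R, (forall q, \sum_p K q p * u p = 0) -> forall p, u p = 0) ->
  forall b : T -> R, exists u : T -> R, forall q, \sum_p K q p * u p = b q.
Proof.
move=> inj b.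
pose M : 'M[R]_#|T| := \matrix_(i, j) K (enum_val j) (enum_val i).
have key u j : (vec u *m M) 0 j = \sum_p K (enum_val j) p * u p.
  rewrite !mxE sum_T; apply: eq_bigr => i _; rewrite !mxE mulrC //.
have Mu : M \in unitmx.
  rewrite -row_free_unit; apply: inj_row_free => v Hv.
  pose u : T -> R := fun x => v 0 (enum_rank x).
  have vu : v = vec u by apply/rowP => i; rewrite mxE /u enum_valK.
  clearbody u; subst v.
  apply/rowP => i; rewrite !mxE.
  apply: (inj u) => q.
  move/rowP: Hv => /(_ (enum_rank q)).
  by rewrite key enum_rankK mxE.
have Hb := mulmxKV Mu (vec b).
move: (vec b *m invmx M) Hb => v Hb.
pose u : T -> R := fun x => v 0 (enum_rank x).
have vv : v = vec u by apply/rowP => i; rewrite mxE /u enum_valK.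
exists u => q.
move/rowP: Hb => /(_ (enum_rank q)).
by rewrite vv key mxE enum_rankK.
Qed.

Lemma XXt0 m N (X : 'M[R]_(m, N)) : X *m X^T = 0 -> X = 0.
Proof.
move=> H; apply/matrixP => i j.
move/matrixP: H => /(_ i i); rewrite !mxE.
move=> Hs.
have : \sum_k X i k ^+ 2 = 0.
  by apply: etrans _ Hs; apply: eq_bigr => k _; rewrite mxE expr2.
move/psumr_eq0P => /(_ (fun k _ => sqr_ge0 _) j isT) /eqP.
by rewrite sqrf_eq0 => /eqP.
Qed.

Lemma proj_exists (w : T -> T -> R) (f : T -> R) :
  exists c : T -> R, forall i, \sum_x (f x - \sum_j c j * w j x) * w i x = 0.
Proof.
pose B : 'M[R]_#|T| := \matrix_(i, j) w (enum_val i) (enum_val j).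
pose G := B *m B^T.
have sGB : (G <= B^T)%MS by apply: submxMl.
have kk : (kermx G <= kermx B)%MS.
  apply/sub_kermxP; apply: XXt0.
  by rewrite trmx_mul !mulmxA -(mulmxA (kermx G)) mulmx_ker mul0mx.
have rk : (\rank B^T <= \rank G)%N.
  have := mxrankS kk; rewrite !mxrank_ker mxrank_tr.
  have := rank_leq_row G; have := rank_leq_row B; lia.
have sBG : (B^T <= G)%MS.
  by rewrite -(mxrank_leqif_sup sGB).2 eqn_leq rk (mxrank_leqif_sup sGB).1.
have /submxP [C HC] : (vec f *m B^T <= G)%MS.
  exact: submx_trans (submxMl _ _) sBG.
exists (fun x => C 0 (enum_rank x)) => i.
have H0 : (vec f - C *m B) *m B^T = 0 by rewrite mulmxBl HC mulmxA subrr.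
move/rowP: H0 => /(_ (enum_rank i)).
rewrite !mxE => H; rewrite -[RHS]H sum_T.
apply: eq_bigr => k _; rewrite !mxE enum_rankK; congr (_ * _).
rewrite sum_T; congr (_ - _); apply: eq_bigr => l _; rewrite !mxE enum_valK //.
Qed.
End LA.

Section Comb.
Variables d n : nat.
Implicit Types p q x : pt d n.

Lemma l1_sym p q : l1 p q = l1 q p.
Proof. by apply: eq_bigr => i _; rewrite addnC. Qed.

Lemma edge_sym p q : edge p q = edge q p.
Proof. by rewrite /edge l1_sym; case: (inV p); case: (inV q); case: (inB p); case: (inB q). Qed.

Lemma l1_self p : l1 p p = 0%N.
Proof. by apply: big1 => i _; rewrite subnn. Qed.

Lemma edge_irr p : edge p p = false.
Proof. by rewrite /edge l1_self !andbF. Qed.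

Lemma inB_notD x : inB x -> ~~ inD x.
Proof. by case/andP. Qed.

Lemma inDP x : inD x -> forall i, (0 < (x i : nat) <= n)%N.
Proof. by move/forallP. Qed.

Lemma l1_one p q : l1 p q = 1%N -> exists i,
  (forall j, j != i -> (q j : nat) = p j) /\
  ((q i : nat) = (p i).+1 \/ (p i : nat) = (q i).+1).
Proof.
rewrite /l1.
case: (pickP (fun i => ((p i : nat) - q i) + ((q i : nat) - p i) != 0)%N) => [i Hi|H0]; last first.
  by rewrite big1 // => i _; move/negbFE/eqP: (H0 i).
rewrite (bigD1 i) //= => H.
have Hr : (\sum_(j | j != i) (((p j : nat) - q j) + ((q j : nat) - p j)) == 0)%N.
  move: Hi H; rewrite -lt0n; set a := (_ + _)%N; set S := (bigop _ _ _) => Ha HS; apply/eqP; lia.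
move: Hr; rewrite sum_nat_eq0 => /forallP Hr.
exists i; split.
  move=> j ji; move: (Hr j); rewrite ji /= => /eqP; lia.
by move: Hi H Hr; rewrite -lt0n => Hi H _; lia.
Qed.

Lemma ssum_split x i : ssum x = ((x i : nat) + \sum_(j | j != i) (x j : nat))%N.
Proof. by rewrite /ssum (bigD1 i). Qed.

Lemma l1_ssum p q : l1 p q = 1%N ->
  exists i, (forall j, j != i -> (q j : nat) = p j) /\
            (((q i : nat) = (p i).+1 /\ ssum q = (ssum p).+1) \/
            ((p i : nat) = (q i).+1 /\ ssum p = (ssum q).+1)).
Proof.
move=> /l1_one [i [Hj Hi]]; exists i; split => //.
have E : (\sum_(j | j != i) (q j : nat) = \sum_(j | j != i) (p j : nat))%N.
  by apply: eq_bigr => j /Hj.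
rewrite !(ssum_split _ i) E; lia.
Qed.

Lemma l1_ssum_le p q : l1 p q = 1%N -> (ssum p <= (ssum q).+1)%N.
Proof. by case/l1_ssum => i [_ [[_ ->]|[_ ->]]]; lia. Qed.

Lemma l1_top p q j : inD p -> l1 p q = 1%N -> (q j : nat) = n.+1 -> ssum q = (ssum p).+1.
Proof.
move=> pD H qj; have [i [Hj Hi]] := l1_ssum H.
have Pd := inDP pD.
case: (eqVneq j i) => [ji|ji]; last by have := Pd j; rewrite -(Hj j ji) qj; lia.
subst j; case: Hi => [[_ ->]|[Hk E]] //.
by have := Pd i; rewrite Hk qj; lia.
Qed.

Definition dec p (i0 : 'I_d) : pt d n :=
  [ffun j => if j == i0 then inord (p j).-1 else p j].

Lemma dec_val p i0 : (dec p i0 i0 : nat) = (p i0).-1.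
Proof. by rewrite ffunE eqxx inordK //; have := ltn_ord (p i0); lia. Qed.

Lemma edge_dec p i0 : inD p -> edge p (dec p i0).
Proof.
move=> pD.
have L : l1 p (dec p i0) = 1%N.
  rewrite /l1 (bigD1 i0) //= big1 => [|j ji]; last by rewrite ffunE (negbTE ji) subnn.
  by rewrite dec_val; have := inDP pD i0; lia.
apply/and4P; split.
- by rewrite /inV pD.
- rewrite /inV; case: (boolP (inD _)) => //= nD.
  by rewrite /inB nD /=; apply/existsP; exists p; rewrite pD L.
- by rewrite L.
- by rewrite /inB pD.
Qed.
End Comb.

Section Uniq.
Variables (R : realType) (d n : nat) (gam : pt d n -> pt d n -> R).
Hypothesis Hsym : forall p q, edge p q -> gam p q = gam q p.
Hypothesis Hpos : forall p q, edge p q -> 0 < gam p q.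
Hypothesis Hd : (0 < d)%N.

Lemma uniq0 (Om : pred (pt d n)) (u : pt d n -> R) :
  (forall p, Om p -> inD p) -> (forall p, ~~ Om p -> u p = 0) ->
  (forall p, Om p -> \sum_(q | edge p q) gam p q * (u q - u p) = 0) ->
  forall p, u p = 0.
Proof.
move=> OmD off harm.
have E1 : \sum_p \sum_(q | edge p q) gam p q * u p * (u q - u p) = 0.
  apply: big1 => p _; case: (boolP (Om p)) => Hp.
    transitivity (u p * \sum_(q | edge p q) gam p q * (u q - u p)); last by rewrite harm ?mulr0.
    rewrite mulr_sumr; apply: eq_bigr => q _.
    by rewrite mulrA (mulrC (u p)).
  by rewrite (off p Hp); apply: big1 => q _; rewrite mulr0 mul0r.
have E2 : \sum_p \sum_(q | edge p q) gam p q * u q * (u p - u q) =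
          \sum_p \sum_(q | edge p q) gam p q * u p * (u q - u p).
  under eq_bigr do rewrite big_mkcond.
  rewrite exchange_big /=; apply: eq_bigr => p _.
  rewrite [RHS]big_mkcond; apply: eq_bigr => q _; rewrite edge_sym; case: ifP => // e.
  by rewrite Hsym // edge_sym.
have E3 : \sum_p \sum_(q | edge p q) gam p q * (u q - u p) ^+ 2 = 0.
  transitivity (- \sum_p \sum_(q | edge p q)
     (gam p q * u p * (u q - u p) + gam p q * u q * (u p - u q))).
    rewrite -sumrN; apply: eq_bigr => p _; rewrite -sumrN; apply: eq_bigr => q _.
    rewrite expr2; ring.
  under eq_bigr do rewrite big_split.
  by rewrite big_split /= E2 E1 addr0 oppr0.
have Eq : forall p q, edge p q -> u p = u q.
  move=> p q e.
  have G : forall p q, edge p q -> 0 <= gam p q * (u q - u p) ^+ 2.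
    by move=> p' q' e'; rewrite mulr_ge0 ?sqr_ge0 // ltW // Hpos.
  have H1 : \sum_(q | edge p q) gam p q * (u q - u p) ^+ 2 = 0.
    by apply: (psumr_eq0P _ E3) => // p' _; apply: sumr_ge0 => q' e'; apply: G.
  have := psumr_eq0P (G p) H1 e.
  move/eqP; rewrite mulf_eq0 (gt_eqF (Hpos e)) /= sqrf_eq0 subr_eq0 => /eqP; done.
pose i0 : 'I_d := Ordinal Hd.
suff K : forall k (p : pt d n), (p i0 : nat) = k -> u p = 0 by move=> p; exact: (K _ p erefl).
elim => [|k IH] p Hk; case: (boolP (Om p)) => Hp; try exact: off.
  by have := inDP (OmD p Hp) i0; rewrite Hk.
rewrite (Eq _ _ (edge_dec i0 (OmD p Hp))); apply: IH.
by rewrite dec_val Hk.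
Qed.
End Uniq.

Section Dir.
Variables (R : realType) (d n : nat) (gam : pt d n -> pt d n -> R).
Hypothesis Hsym : forall p q, edge p q -> gam p q = gam q p.
Hypothesis Hpos : forall p q, edge p q -> 0 < gam p q.
Hypothesis Hd : (0 < d)%N.

Lemma vp_sum (p : pt d n) (u : pt d n -> R) :
  \sum_r vp gam p r * u r = \sum_(q | edge p q) gam p q * (u q - u p).
Proof.
have -> : \sum_r vp gam p r * u r = \sum_r ((if edge p r then gam p r * u r else 0) +
     (if r == p then - (\sum_(q | edge p q) gam p q) * u p else 0)).
  apply: eq_bigr => r _; rewrite /vp; case: ifP => e.
    have : r != p by apply: contraTneq e => ->; rewrite edge_irr.
    by move/negbTE ->; rewrite addr0.
  by case: eqP => [->|_]; rewrite ?add0r ?mul0r ?addr0.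
rewrite big_split /= -big_mkcond -big_mkcond /= big_pred1_eq.
rewrite mulNr mulr_suml -sumrB; apply: eq_bigr => q _; by rewrite mulrBr.
Qed.

Lemma sum_delta (u : pt d n -> R) p : \sum_q (q == p)%:R * u q = u p.
Proof.
rewrite (bigD1 p) //= eqxx mul1r big1 ?addr0 // => q qp.
by rewrite (negbTE qp) mul0r.
Qed.

Lemma edge_V (p q : pt d n) : edge p q -> inV q.
Proof. by case/and4P. Qed.

Lemma edge_l1 (p q : pt d n) : edge p q -> l1 p q = 1%N.
Proof. by case/and4P => _ _ /eqP. Qed.

Lemma dir_exists (phi : pt d n -> R) : exists u, dirichlet gam phi u.
Proof.
pose K q p := if inD q then vp gam q p else (p == q)%:R.
pose b q := if inD q then 0 else if inB q then phi q else 0.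
have [|u Hu] := solve_inj (K := K) _ b.
  move=> u Hu'; apply: (uniq0 Hsym Hpos Hd (Om := @inD d n) (u := u)) => // p Hp.
    by have := Hu' p; rewrite /K (negbTE Hp) sum_delta.
  by have := Hu' p; rewrite /K Hp vp_sum.
exists u; split; [|split].
- by move=> p pD; have := Hu p; rewrite /K /b pD vp_sum.
- by move=> p pB; have := Hu p; rewrite /K /b (negbTE (inB_notD pB)) pB sum_delta.
- move=> p; rewrite /inV negb_or => /andP [pD pB].
  by have := Hu p; rewrite /K /b (negbTE pD) (negbTE pB) sum_delta.
Qed.

Lemma Sgam_dir (phi : pt d n -> R) : dirichlet gam phi (Sgam gam phi).
Proof. exact: (epsilon_spec _ _ (dir_exists phi)). Qed.

Lemma dir_uniq (phi u v : pt d n -> R) :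
  dirichlet gam phi u -> dirichlet gam phi v -> forall x, u x = v x.
Proof.
move=> [h1 [b1 o1]] [h2 [b2 o2]] x; apply/eqP; rewrite -subr_eq0; apply/eqP.
apply: (uniq0 Hsym Hpos Hd (Om := @inD d n) (u := fun x => u x - v x)) => // p Hp.
  case: (boolP (inB p)) => pB; first by rewrite b1 // b2 // subrr.
  by rewrite o1 ?o2 ?subrr // /inV negb_or Hp pB.
transitivity (\sum_(q | edge p q) gam p q * (u q - u p) -
              \sum_(q | edge p q) gam p q * (v q - v p)); last by rewrite h1 // h2 // subrr.
by rewrite -sumrB; apply: eq_bigr => q _; rewrite -mulrBr; congr (_ * _); ring.
Qed.

Variable t : nat.

Lemma inKSm x : x \in KSm d n t -> inB x /\ (ssum x <= t)%N.
Proof.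
rewrite /KSm => /bigcupP [l _]; rewrite inE => /and3P [xB /eqP s _].
by split => //; have := ltn_ord l; lia.
Qed.

Lemma inKSp x : x \in KSp d n t.+1 ->
  [/\ inB x, (ssum x <= t.+1)%N & exists j, (x j : nat) = n.+1].
Proof.
rewrite /KSp => /bigcupP [l _]; rewrite inE => /and3P [xB /eqP s /existsP [j /eqP xj]].
by split => //; [have := ltn_ord l; lia | exists j].
Qed.

Lemma inJ x : x \in JS d n t -> inB x.
Proof. by rewrite /JS in_setU => /orP [/inKSm [] | /inKSp []]. Qed.

Lemma inA x : (x \in AS d n t) = (inD x && (ssum x <= t)%N) || (x \in JS d n t).
Proof. by rewrite /AS in_setU /LS in_set. Qed.

Lemma NbrFar p q : inD p -> (t.+2 <= ssum p)%N -> edge p q ->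
  (t < ssum q)%N /\ q \notin JS d n t.
Proof.
move=> pD sp e; have L := edge_l1 e; have := l1_ssum_le L => sq.
split; first by lia.
apply/negP; rewrite /JS in_setU => /orP [/inKSm [_ s] | /inKSp [_ s [j qj]]]; first by lia.
by have := l1_top pD L qj; lia.
Qed.

Lemma vanish (phi : pt d n -> R) :
  (forall x, x \notin JS d n t -> phi x = 0) ->
  (forall x, x \in Lv d n t.+1 -> Sgam gam phi x = 0) ->
  forall x, inD x -> (t < ssum x)%N -> Sgam gam phi x = 0.
Proof.
move=> phi0 Hl; have [h [bd o]] := Sgam_dir phi.
set s := Sgam gam phi in h bd o Hl *.
pose Om (x : pt d n) := inD x && (t.+2 <= ssum x)%N.
pose z (x : pt d n) := if Om x then s x else 0.
have Z : forall x, z x = 0.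
  apply: (uniq0 Hsym Hpos Hd (Om := Om)).
  - by move=> p /andP [].
  - by move=> p Hp; rewrite /z (negbTE Hp).
  move=> p Hp; have /andP [pD sp] := Hp.
  transitivity (\sum_(q | edge p q) gam p q * (s q - s p)); last exact: h.
  apply: eq_bigr => q e; rewrite /z Hp; case: ifP => // Hq.
  have [lt nJ] := NbrFar pD sp e.
  suff -> : s q = 0 by [].
  case: (boolP (inD q)) => qD.
    apply: Hl; rewrite /Lv inE qD /=; move: Hq; rewrite /Om qD /=; lia.
  have qB : inB q by have := edge_V e; rewrite /inV (negbTE qD).
  by rewrite bd // phi0.
move=> x xD xt; case: (ltnP (ssum x) t.+2) => [lt2|ge2].
  by apply: Hl; rewrite /Lv inE xD /=; lia.
by have := Z x; rewrite /z /Om xD ge2.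
Qed.

Lemma Perp u : Ut gam t u -> forall p, p \in LS d n t.+1 ->
  \sum_x u x * restr (AS d n t) (vp gam p) x = 0.
Proof.
move=> [phi [phi0 [Hl Hu]]] p; rewrite /LS inE => /andP [pD pt].
have [h [bd o]] := Sgam_dir phi.
transitivity (\sum_x vp gam p x * Sgam gam phi x); last by rewrite vp_sum h.
apply: eq_bigr => x _; rewrite Hu /restr; case: ifP => xA; first by rewrite mulrC.
rewrite mul0r /vp; case: ifP => e.
  case: (boolP (inD x)) => xD.
    rewrite (vanish phi0 Hl xD) ?mulr0 //; move: xA; rewrite inA xD /=.
    by case/norP => /negbTE; rewrite leqNgt => /negbFE.
  have xB : inB x by have := edge_V e; rewrite /inV (negbTE xD).
  by rewrite bd // phi0 ?mulr0 //; move: xA; rewrite inA => /norP [].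
case: eqP => [xp|_]; last by rewrite mul0r.
subst x; rewrite Hl ?mulr0 //; rewrite /Lv inE pD /=; move: xA; rewrite inA pD /=.
by case/norP; rewrite -ltnNge; lia.
Qed.

Lemma Wperp (g : pt d n -> R) :
  (forall x, x \notin AS d n t -> g x = 0) ->
  (forall p, p \in LS d n t.+1 -> \sum_x g x * restr (AS d n t) (vp gam p) x = 0) ->
  Ut gam t g.
Proof.
move=> g0 Hp.
pose phi := restr (JS d n t) g.
have DnJ : forall x, inD x -> x \notin JS d n t.
  by move=> x xD; apply/negP => /inJ /inB_notD; rewrite xD.
have D : dirichlet gam phi g.
  split; [|split].
  - move=> p pD; case: (leqP (ssum p) t.+1) => sp.
      have Hpp : p \in LS d n t.+1 by rewrite /LS inE pD sp.
      rewrite -vp_sum -[RHS](Hp p Hpp).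
      apply: eq_bigr => x _; rewrite /restr; case: ifP => xA; first by rewrite mulrC.
      by rewrite g0 ?xA // mul0r mulr0.
    apply: big1 => q e; have [sq nJ] := NbrFar pD sp e.
    rewrite !g0 ?subrr ?mulr0 // inA negb_or ?(negbTE nJ) ?(negbTE (DnJ p pD)) /= ?andbF //.
      by rewrite andbT pD /= -ltnNge; apply: ltnW.
    by rewrite andbT negb_and -ltnNge sq orbT.
  - move=> p pB; rewrite /phi /restr; case: ifP => // pJ.
    by rewrite g0 // inA negb_or pJ (negbTE (inB_notD pB)).
  - move=> p pV; rewrite g0 // inA negb_or.
    move: pV; rewrite /inV negb_or => /andP [pD pB]; rewrite (negbTE pD) /=.
    by apply/negP => /inJ; rewrite (negbTE pB).
have E := dir_uniq (Sgam_dir phi) D.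
exists phi; split; first by move=> x xJ; rewrite /phi /restr (negbTE xJ).
split.
  move=> x; rewrite /Lv inE => /andP [xD /eqP xs]; rewrite E g0 //.
  by rewrite inA negb_or (negbTE (DnJ x xD)) xs ltnn andbF.
by move=> x; rewrite /restr E; case: ifP => // xA; rewrite g0 ?xA.
Qed.
End Dir.

Theorem lemma2p4 (R : realType) (d n t : nat) (gam : pt d n -> pt d n -> R) :
  (2 <= d)%N -> (1 <= n)%N -> (d.-1 <= t)%N -> (t <= (d * n).-1)%N ->
  (forall p q, edge p q -> gam p q = gam q p) ->
  (forall p q, edge p q -> 0 < gam p q) ->
  (* orthogonality *)
  (forall u w, Ut gam t u -> Wt gam t w -> dotp u w = 0) /\
  (* the sum is direct *)
  (forall f, Ut gam t f -> Wt gam t f -> forall x, f x = 0) /\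
  (* the sum is all of R^{L_t^S ∪ J_t^S} *)
  (forall f : pt d n -> R, (forall x, x \notin AS d n t -> f x = 0) ->
     exists u w, [/\ Ut gam t u, Wt gam t w & forall x, f x = u x + w x]).
Proof.
move=> H2 _ _ _ Hsym Hpos.
have Hd : (0 < d)%N by lia.
have P1 : forall u w, Ut gam t u -> Wt gam t w -> dotp u w = 0.
  move=> u w Hu [c Hw]; rewrite /dotp.
  under eq_bigr do rewrite Hw mulr_sumr.
  rewrite exchange_big /=; apply: big1 => p pL.
  transitivity (c p * \sum_x u x * restr (AS d n t) (vp gam p) x).
    by rewrite mulr_sumr; apply: eq_bigr => x _; rewrite mulrCA.
  by rewrite (Perp Hsym Hpos Hd Hu pL) mulr0.
split => //; split.
  move=> f Hu Hw x; have := P1 f f Hu Hw; rewrite /dotp => H.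
  have G : forall i : pt d n, true -> 0 <= f i * f i by move=> i _; rewrite -expr2 sqr_ge0.
  have := psumr_eq0P G H (i := x) isT.
  by move/eqP; rewrite mulf_eq0 orbb => /eqP.
move=> f f0.
pose w := fun p x => if p \in LS d n t.+1 then restr (AS d n t) (vp gam p) x else 0.
have [c Hc] := proj_exists w f.
pose wv := fun x => \sum_j c j * w j x.
exists (fun x => f x - wv x), wv; split.
- apply: (Wperp Hsym Hpos Hd).
    move=> x xA; rewrite f0 // /wv big1 ?subr0 // => j _.
    by rewrite /w /restr (negbTE xA); case: ifP; rewrite mulr0.
  by move=> p pL; have := Hc p; rewrite /w pL.
- by exists c => x; rewrite /wv [RHS]big_mkcond; apply: eq_bigr => j _; rewrite /w; case: ifP; rewrite ?mulr0.
- by move=> x; rewrite subrK.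
Qed.
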